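(* Let $t\ge 1$ and let $\kappa_1,\ldots,\kappa_t$ be integers with $\kappa_i\ge 2$ and $\kappa_1\kappa_2\cdots\kappa_t=n$. Let $\ell_{i,j}$ be integers with $0\le \ell_{i,j}\le \kappa_j-1$ for $i=2,\ldots,t$ and $j=1,\ldots,i-1$. Then, with $K=(\kappa_i)$ and $L=(\ell_{i,j})$, the set $\Gamma(K,L)$ is an Abelian group (under the multiplication of the quotient ring) of order $|\Gamma(K,L)|=n$.
   Context: Let $I$ be the ideal of the polynomial ring $\mathbb{R}[x_1,\ldots,x_t]$ generated by $x_1^{\kappa_1}-1$ and by $x_i^{\kappa_i}-x_1^{\ell_{i,1}}\cdots x_{i-1}^{\ell_{i,i-1}}$ for $i=2,\ldots,t$. The monomial group $\Gamma(K,L)$ is the set of residue classes in $\mathbb{R}[x_1,\ldots,x_t]/I$ of the monomials $x_1^{j_1}x_2^{j_2}\cdots x_t^{j_t}$ with $0\le j_i\le \kappa_i-1$ for all $i$; a product of two such monomials is reduced back to this form using the relations $x_1^{\kappa_1}=1$ and $x_i^{\kappa_i}=x_1^{\ell_{i,1}}\cdots x_{i-1}^{\ell_{i,i-1}}$ ($i\ge 2$). *)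

(* Defs.v *)
From HB Require Import structures.
From mathcomp Require Import all_boot all_order all_algebra.
From mathcomp Require Import mpoly.
From Stdlib Require Rdefinitions.
From mathcomp Require Import Rstruct.
Set Implicit Arguments. Unset Strict Implicit. Unset Printing Implicit Defensive.
Import GRing.Theory.
Local Open Scope ring_scope.

(* Polynomial ring R[x_1..x_t]; variable x_{i+1} is 'X_i, i : 'I_t. *)
Notation Rpoly t := {mpoly Rdefinitions.R[t]}.

Definition gen (t : nat) (kappa : 'I_t -> nat) (ell : 'I_t -> 'I_t -> nat)
  (i : 'I_t) : Rpoly t :=
  'X_i ^+ kappa i - \prod_(j < t | (nat_of_ord j < nat_of_ord i)%N) 'X_j ^+ ell i j.

Definition in_ideal (t : nat) (kappa : 'I_t -> nat) (ell : 'I_t -> 'I_t -> nat)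
  (p : Rpoly t) : Prop :=
  exists c : 'I_t -> Rpoly t, p = \sum_(i < t) c i * gen kappa ell i.

Definition congr_I (t : nat) (kappa : 'I_t -> nat) (ell : 'I_t -> 'I_t -> nat)
  (p q : Rpoly t) : Prop := in_ideal kappa ell (p - q).

Definition box (t : nat) (kappa : 'I_t -> nat) : finType :=
  {dffun forall i : 'I_t, 'I_(kappa i)}.

Definition mono (t : nat) (kappa : 'I_t -> nat) (e : box kappa) : Rpoly t :=
  \prod_(i < t) 'X_i ^+ (e i : nat).

(* Main.v *)
Require Import Defs.
From HB Require Import structures.
From mathcomp Require Import all_boot all_order all_algebra.
From mathcomp Require Import mpoly.
From Stdlib Require Rdefinitions.
From mathcomp Require Import Rstruct.
From mathcomp Require Import zify ring.
Set Implicit Arguments. Unset Strict Implicit. Unset Printing Implicit Defensive.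
Import GRing.Theory.
Local Open Scope ring_scope.
From Stdlib Require Import ClassicalEpsilon.
Section Phi.
Variable t : nat.
Notation RR := Rdefinitions.R.
Implicit Types p q : Rpoly t.

Definition Phi (g : 'X_{1..t} -> RR) p : RR := \sum_(m <- msupp p) p@_m * g m.

Lemma PhiS g p s : uniq s -> {subset msupp p <= s} ->
  Phi g p = \sum_(m <- s) p@_m * g m.
Proof.
move=> us sub; rewrite (bigID (mem (msupp p))) /= [X in _ + X]big1 ?addr0; last first.
  by move=> m /memN_msupp_eq0 ->; rewrite mul0r.
rewrite -big_filter /Phi; apply: perm_big; apply: uniq_perm.
- exact: msupp_uniq.
- exact: filter_uniq.
by move=> m; rewrite mem_filter; case H: (m \in msupp p) => //=; rewrite sub.
Qed.

Lemma Phi_is_additive g : additive (Phi g).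
Proof.
move=> p q /=.
set s := undup (msupp p ++ msupp q ++ msupp (p - q)).
have us : uniq s by exact: undup_uniq.
rewrite (@PhiS g (p - q) s us) ?(@PhiS g p s us) ?(@PhiS g q s us) -?sumrB.
- by apply: eq_bigr => m _; rewrite mcoeffB mulrBl.
all: by move=> m mm; rewrite mem_undup !mem_cat mm ?orbT.
Qed.

HB.instance Definition _ g := GRing.isAdditive.Build (Rpoly t) RR (Phi g)
  (Phi_is_additive g).

Lemma PhiMX g p u : Phi g (p * 'X_[u]) = \sum_(m <- msupp p) p@_m * g (u + m)%MM.
Proof.
rewrite /Phi (perm_big _ (msuppMX p u)) big_map.
by apply: eq_bigr => m _; rewrite mcoeffMX.
Qed.

Lemma PhiX g u : Phi g 'X_[u] = g u.
Proof. by rewrite /Phi msuppX big_seq1 mcoeffX eqxx mul1r. Qed.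

End Phi.
Section Main.
Variable t : nat.
Variable kappa : 'I_t -> nat.
Variable ell : 'I_t -> 'I_t -> nat.
Notation RR := Rdefinitions.R.
Notation II := (in_ideal kappa ell).
Notation CC := (congr_I kappa ell).

Lemma II0 : II 0.
Proof. by exists (fun _ => 0); rewrite big1 // => i _; rewrite mul0r. Qed.

Lemma IID p q : II p -> II q -> II (p + q).
Proof.
move=> [c ->] [d ->]; exists (fun i => c i + d i).
by rewrite -big_split /=; apply: eq_bigr => i _; rewrite mulrDl.
Qed.

Lemma IIM r p : II p -> II (r * p).
Proof.
move=> [c ->]; exists (fun i => r * c i).
by rewrite mulr_sumr; apply: eq_bigr => i _; rewrite mulrA.
Qed.

Lemma IIN p : II p -> II (- p).
Proof. by move=> h; rewrite -mulN1r; apply: IIM. Qed.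

Lemma IIgen r i : II (r * gen kappa ell i).
Proof.
exists (fun j => if j == i then r else 0).
rewrite (bigD1 i) //= eqxx big1 ?addr0 // => j /negbTE ->; by rewrite mul0r.
Qed.

Lemma CCrefl p : CC p p.
Proof. by rewrite /congr_I subrr; exact: II0. Qed.

Lemma CCsym p q : CC p q -> CC q p.
Proof. by rewrite /congr_I => /IIN; rewrite opprB. Qed.

Lemma CCtrans p q r : CC p q -> CC q r -> CC p r.
Proof.
rewrite /congr_I => h1 h2; have := IID h1 h2.
by rewrite addrA subrK.
Qed.

Lemma CCmull r p q : CC p q -> CC (r * p) (r * q).
Proof. by rewrite /congr_I -mulrBr; apply: IIM. Qed.

Lemma CCmulr r p q : CC p q -> CC (p * r) (q * r).
Proof. by rewrite ![_ * r]mulrC; apply: CCmull. Qed.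

Definition mL (i : 'I_t) : 'X_{1..t} := (\sum_(j < t | (j < i)%N) U_(j) *+ ell i j)%MM.

Lemma mLE i j : mL i j = if (j < i)%N then ell i j else 0%N.
Proof.
rewrite /mL mnm_sumE; under eq_bigr do rewrite mulmnE mnm1E.
case: ifP => ji.
  rewrite (bigD1 j) //= eqxx mul1n big1 ?addn0 // => j' /andP[_ ne].
  by rewrite (negbTE ne) mul0n.
rewrite big1 // => j' lt; case: eqP => [e|]; last by rewrite mul0n.
by move: lt; rewrite e ji.
Qed.

Lemma genX i : gen kappa ell i = 'X_[U_(i) *+ kappa i] - 'X_[mL i].
Proof. by rewrite /gen mpolyXn mprodXnE. Qed.

Definition me (e : box kappa) : 'X_{1..t} := [multinom (e i : nat) | i < t].

Lemma monoE e : mono e = 'X_[me e].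
Proof. by rewrite /mono mpolyXE_id; apply: eq_bigr => i _; rewrite mnmE. Qed.


Definition vv (k j : 'I_t) : int := ((U_(k) *+ kappa k)%MM j)%:Z - (mL k j)%:Z.

Definition Lrel (a b : 'X_{1..t}) : Prop :=
  exists c : 'I_t -> int, forall j, (a j)%:Z - (b j)%:Z = \sum_k c k * vv k j.

Lemma Lrefl (a : 'X_{1..t}) : Lrel a a.
Proof. by exists (fun _ => 0) => j; rewrite subrr big1 // => k _; rewrite mul0r. Qed.

Lemma Lshift (a a' b : 'X_{1..t}) i (d : int) :
  (forall j, (a j)%:Z - (a' j)%:Z = d * vv i j) -> Lrel a b -> Lrel a' b.
Proof.
move=> H [c Hc]; exists (fun k => c k - (k == i)%:R * d) => j.
have -> : (a' j)%:Z - (b j)%:Z = ((a j)%:Z - (b j)%:Z) - ((a j)%:Z - (a' j)%:Z).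
  by ring.
rewrite Hc H.
under [RHS]eq_bigr do rewrite mulrBl.
rewrite sumrB; congr (_ - _).
rewrite (bigD1 i) //= eqxx mul1r big1 ?addr0 // => k /negbTE ->.
by rewrite mul0r mul0r.
Qed.

Lemma Linv (b m : 'X_{1..t}) i : Lrel ((U_(i) *+ kappa i) + m)%MM b <-> Lrel (mL i + m)%MM b.
Proof.
split; [apply: (@Lshift _ _ b i 1) | apply: (@Lshift _ _ b i (-1))] => j;
  rewrite !mnmDE /vv !PoszD; ring.
Qed.

Definition gfun (b : 'X_{1..t}) (m : 'X_{1..t}) : RR :=
  if excluded_middle_informative (Lrel m b) then 1 else 0.

Lemma Phi_gen b r i : Phi (gfun b) (r * gen kappa ell i) = 0.
Proof.
rewrite genX mulrBr raddfB /= !PhiMX; apply/eqP; rewrite subr_eq0; apply/eqP.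
apply: eq_bigr => m _; congr (_ * _); rewrite /gfun.
case: excluded_middle_informative => h1; case: excluded_middle_informative => h2 //.
- by case: h2; apply/Linv.
- by case: h1; apply/Linv.
Qed.

Lemma Phi_ideal b p : II p -> Phi (gfun b) p = 0.
Proof.
move=> [c ->]; rewrite raddf_sum big1 // => i _; exact: Phi_gen.
Qed.

Lemma Lbox (e e' : box kappa) : (forall i, 0 < kappa i)%N ->
  Lrel (me e') (me e) -> e' = e.
Proof.
move=> kpos [c Hc].
have vvE k j : vv k j = if k == j then (kappa k)%:Z else if (j < k)%N then - (ell k j)%:Z else 0.
  rewrite /vv mulmnE mnm1E mLE; case: eqP => [->|ne]; first by rewrite ltnn subr0 mul1n.
  by rewrite mul0n sub0r; case: ifP.
have key (j : 'I_t) : (forall k : 'I_t, (j < k)%N -> c k = 0) -> c j = 0.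
  move=> hk; have := Hc j.
  rewrite (bigD1 j) //= big1 ?addr0; last first.
    move=> k ne; rewrite vvE (negbTE ne); case: ifP => jk; last by rewrite mulr0.
    by rewrite hk // mul0r.
  rewrite vvE eqxx !mnmE => h.
  have l1 := ltn_ord (e j); have l2 := ltn_ord (e' j).
  have kp := kpos j.
  move: h l1 l2 kp; set x := (e j : nat); set y := (e' j : nat); set z := kappa j; set w := c j.
  move=> h l1 l2 kp.
  clearbody x y z w.
  have : (w = 0 \/ 1 <= w \/ w <= -1)%R by lia.
  case=> [//|[hc|hc]]; nia.
have all0 : forall d (j : 'I_t), (t - j <= d)%N -> c j = 0.
  elim=> [|d IH] j hj; first by have := ltn_ord j; lia.
  apply: key => k jk; apply: IH; have := ltn_ord k; lia.
apply/ffunP => j; apply/val_inj => /=.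
have := Hc j; rewrite big1 ?mnmE; last by move=> k _; rewrite (all0 (t - k)%N k) // mul0r.
by move/eqP; rewrite subr_eq0 eqz_nat => /eqP.
Qed.

Hypothesis kpos : forall i, (0 < kappa i)%N.

Lemma CCgen_pow (w : 'X_{1..t}) i q :
  CC ('X_[w + (U_(i) *+ kappa i) *+ q]) ('X_[w + mL i *+ q]).
Proof.
have E : 'X_i ^+ kappa i - 'X_[mL i] = gen kappa ell i by rewrite genX mpolyXn.
rewrite /congr_I !mpolyXD -!mpolyXn -mulrBr subrXX E.
rewrite mulrA [_ * gen _ _ _]mulrC -mulrA mulrC; exact: IIgen.
Qed.

Lemma red k : forall m : 'X_{1..t}, (forall j : 'I_t, (k <= j)%N -> (m j < kappa j)%N) ->
  exists e : box kappa, CC 'X_[m] (mono e).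
Proof.
elim: k => [|k IH] m hm.
  exists (finfun (fun j => Ordinal (hm j (leq0n _)))).
  rewrite monoE (_ : me _ = m); first exact: CCrefl.
  by apply/mnmP => j; rewrite mnmE ffunE.
case: (ltnP k t) => kt; last first.
  apply: IH => j kj; have := ltn_ord j; lia.
pose i := Ordinal kt.
pose q := (m i %/ kappa i)%N; pose r := (m i %% kappa i)%N.
pose w := [multinom (if j == i then r else m j) | j < t].
have Em : m = (w + (U_(i) *+ kappa i) *+ q)%MM.
  apply/mnmP => j; rewrite mnmDE !mulmnE mnm1E mnmE.
  case: (eqVneq j i) => [->|ne].
    by rewrite mul1n mulnC /r /q addnC -divn_eq.
  by rewrite /= !mul0n addn0.
have [|e he] := IH (w + mL i *+ q)%MM; last first.
  exists e; apply: CCtrans he; rewrite {1}Em; exact: CCgen_pow.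
move=> j kj; rewrite mnmDE mulmnE mLE mnmE.
case: eqP => [->|ne].
  by rewrite ltnn mul0n addn0 ltn_pmod.
have ij : ~~ (j < i)%N by rewrite -leqNgt.
rewrite (negbTE ij) mul0n addn0; apply: hm.
have : (nat_of_ord j != k) by apply/eqP => h; apply: ne; apply/val_inj.
move: kj; lia.
Qed.

Lemma red_all (m : 'X_{1..t}) : exists e : box kappa, CC 'X_[m] (mono e).
Proof. apply: (red (k := t)) => j tj; have := ltn_ord j; lia. Qed.

Definition SS (m : 'X_{1..t}) := exists m', CC ('X_[m] * 'X_[m']) 1.

Lemma CCone p q : CC p 1 -> CC q 1 -> CC (p * q) 1.
Proof.
rewrite /congr_I => hp hq.
have -> : p * q - 1 = p * (q - 1) + (p - 1) by ring.
by apply: IID => //; apply: IIM.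
Qed.

Lemma SS0 : SS 0.
Proof. by exists 0%MM; rewrite mpolyX0 mulr1; exact: CCrefl. Qed.

Lemma SSD a b : SS a -> SS b -> SS (a + b).
Proof.
move=> [a' ha] [b' hb]; exists (a' + b')%MM.
have -> : 'X_[a + b] * 'X_[a' + b'] = ('X_[a] * 'X_[a']) * ('X_[b] * 'X_[b']) :> Rpoly t.
  by rewrite !mpolyXD; ring.
exact: CCone.
Qed.

Lemma SSMn a k : SS a -> SS (a *+ k)%MM.
Proof.
move=> ha; elim: k => [|k IH]; first by rewrite mulm0n; exact: SS0.
by rewrite mulmS; apply: SSD.
Qed.

Lemma SSsum (r : seq 'I_t) (P : pred 'I_t) (F : 'I_t -> 'X_{1..t}) :
  (forall j, P j -> SS (F j)) -> SS (\sum_(j <- r | P j) F j)%MM.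
Proof.
move=> h; elim/big_rec: _ => [|j x Pj Sx]; first exact: SS0.
by apply: SSD => //; apply: h.
Qed.

Lemma SSU : forall k (i : 'I_t), (i < k)%N -> SS U_(i).
Proof.
elim=> [|k IH] i ik //.
have hL : SS (mL i).
  apply: SSsum => j ji; apply: SSMn; apply: IH; move: ji ik; lia.
have [b hb] := hL.
exists (U_(i) *+ (kappa i).-1 + b)%MM.
rewrite -mpolyXD addmA -mulmS prednK // mpolyXD.
apply: CCtrans (hb).
by rewrite /congr_I -mulrBl -genX mulrC; exact: IIgen.
Qed.

Lemma SSall m : SS m.
Proof.
rewrite (multinomUE_id m); apply: SSsum => j _; apply: SSMn.
exact: (SSU (k := t)).
Qed.

End Main.

Theorem mainTheorem2 (t n : nat) (kappa : 'I_t -> nat)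
  (ell : 'I_t -> 'I_t -> nat) :
  (1 <= t)%N ->
  (forall i, 2 <= kappa i)%N ->
  (\prod_(i < t) kappa i)%N = n ->
  (forall i j : 'I_t, (nat_of_ord j < nat_of_ord i)%N -> (ell i j <= (kappa j).-1)%N) ->
  [/\ (* |Gamma(K,L)| = n: the n box monomials have pairwise distinct classes *)
      (#|box kappa| = n /\
       forall e e' : box kappa,
         congr_I kappa ell (mono e) (mono e') -> e = e'),
      (* identity: the class of 1 lies in Gamma *)
      (exists e : box kappa, congr_I kappa ell (mono e) 1),
      (* closure under the multiplication of the quotient ring *)
      (forall e1 e2 : box kappa, exists e3 : box kappa,
         congr_I kappa ell (mono e1 * mono e2) (mono e3)),
      (* inverses *)
      (forall e : box kappa, exists e' : box kappa,
         congr_I kappa ell (mono e * mono e') 1)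
    & (* commutativity *)
      (forall e1 e2 : box kappa,
         congr_I kappa ell (mono e1 * mono e2) (mono e2 * mono e1))].
Proof.
move=> _ k2 hn _.
have kpos : forall i, (0 < kappa i)%N by move=> i; have := k2 i; lia.
split.
- split.
    rewrite -hn /box card_dep_ffun foldrE big_image /=.
    by apply: eq_bigr => i _; exact: card_ord.
  move=> e e' h.
  have := Phi_ideal (me e) h.
  rewrite !monoE raddfB /= !PhiX /gfun.
  case: excluded_middle_informative => [h1|h1]; last by case: h1; exact: Lrefl.
  case: excluded_middle_informative => [hl|h2]; last first.
    by move/eqP; rewrite subr0 oner_eq0.
  by move=> _; apply/esym; apply: Lbox hl.
- have [e he] := red_all ell kpos (0%MM).
  by exists e; apply: CCsym; by rewrite mpolyX0 in he.
- move=> e1 e2; rewrite !monoE -mpolyXD; exact: (red_all ell kpos).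
- move=> e; have [m' hm] := SSall ell kpos (me e).
  have [e' he'] := red_all ell kpos m'.
  exists e'; apply: CCtrans hm; rewrite monoE; apply: CCmull; exact: CCsym.
- by move=> e1 e2; rewrite mulrC; exact: CCrefl.
Qed.
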